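(* For every density operator $\rho$ on $\mathbb{C}^d$, $$\frac1d\le C_{\mathcal{F}}(\rho)\le\lambda_{\max}\le 1,$$ where $\lambda_{\max}$ is the largest eigenvalue of $\rho$. Moreover $C_{\mathcal{F}}(\rho)=1$ if and only if $\rho$ is (the projector onto) a maximally coherent state, and if $\rho$ is incoherent then $C_{\mathcal{F}}(\rho)=1/d$.
   Context: Fix the computational basis $\{|i\rangle\}_{i=0}^{d-1}$ of $\mathbb{C}^d$ as the incoherent basis; a state is incoherent if it is diagonal in this basis. A maximally coherent state is a pure state of the form $\frac1{\sqrt d}\sum_{i}e^{\mathrm{i}\theta_i}|i\rangle$ with real $\theta_i$. The quantum coherence fraction is $C_{\mathcal{F}}(\rho)=\max_{|\phi\rangle\text{ maximally coherent}}\langle\phi|\rho|\phi\rangle$. *)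

(* Defs.v *)
From HB Require Import structures.
From mathcomp Require Import all_boot all_order all_algebra.
From mathcomp Require Import spectral.
From mathcomp Require Import complex.
From mathcomp Require Import classical_sets reals trigo.
Set Implicit Arguments. Unset Strict Implicit. Unset Printing Implicit Defensive.
Import Order.TTheory GRing.Theory Num.Theory.
Local Open Scope ring_scope.
Local Open Scope complex_scope.
Local Open Scope classical_set_scope.
Local Open Scope sesquilinear_scope.

(* Kets are column vectors 'cV[R[i]]_d, operators are 'M[R[i]]_d, in the
   computational (incoherent) basis; M ^t* is the conjugate transpose. *)

Definition density_op (R : realType) (d : nat) (rho : 'M[R[i]]_d) : Prop :=
  rho ^t* = rho /\
  (forall v : 'cV[R[i]]_d, 0 <= (v ^t* *m rho *m v) 0 0) /\
  \tr rho = 1.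

Definition max_coherent (R : realType) (d : nat) (phi : 'cV[R[i]]_d) : Prop :=
  exists theta : 'I_d -> R, forall i : 'I_d,
    phi i 0 = (cos (theta i) +i* sin (theta i)) / (Num.sqrt (d%:R : R))%:C.

(* <phi| rho |phi>  (real part; it is real for Hermitian rho) *)
Definition fidelity (R : realType) (d : nat) (rho : 'M[R[i]]_d)
  (phi : 'cV[R[i]]_d) : R := complex.Re ((phi ^t* *m rho *m phi) 0 0).

Definition coh_fraction (R : realType) (d : nat) (rho : 'M[R[i]]_d) : R :=
  sup [set fidelity rho phi | phi in @max_coherent R d].

Definition largest_eigenvalue (R : realType) (d : nat) (rho : 'M[R[i]]_d)
  (l : R) : Prop :=
  eigenvalue rho l%:C /\ (forall a : R[i], eigenvalue rho a -> complex.Re a <= l).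

Definition incoherent (R : realType) (d : nat) (rho : 'M[R[i]]_d) : Prop :=
  is_diag_mx rho.

(* Main.v *)
Require Import Defs.
From HB Require Import structures.
From mathcomp Require Import all_boot all_order all_algebra.
From mathcomp Require Import spectral.
From mathcomp Require Import complex.
From mathcomp Require Import classical_sets reals trigo.
From mathcomp Require Import ring lra.
Import Order.TTheory GRing.Theory Num.Theory.
Local Open Scope ring_scope.
Local Open Scope complex_scope.
Local Open Scope sesquilinear_scope.

Section Gen.
Variable R : realType.

Lemma trmxC_mul m n p (A : 'M[R[i]]_(m,n)) (B : 'M_(n,p)) :
  (A *m B)^t* = B^t* *m A^t*.
Proof. by rewrite trmx_mul map_mxM. Qed.

Definition nrm2 (z : R[i]) : R := complex.Re z ^+ 2 + complex.Im z ^+ 2.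

Lemma nrm2E (z : R[i]) : (nrm2 z)%:C = z * z^*.
Proof. by rewrite /nrm2 add_Re2_Im2 normCK. Qed.

Lemma nrm2_ge0 z : 0 <= nrm2 z.
Proof. by rewrite /nrm2 addr_ge0 // sqr_ge0. Qed.

Lemma nrm2_eq0 z : nrm2 z = 0 -> z = 0.
Proof.
move=> h; have : `|z| ^+ 2 = 0 by rewrite -add_Re2_Im2 -/(nrm2 z) h.
by move/eqP; rewrite expf_eq0 /= normr_eq0 => /eqP.
Qed.

Lemma dot_nrm2 n (x : 'rV[R[i]]_n) : (x *m x^t*) 0 0 = (\sum_i nrm2 (x 0 i))%:C.
Proof.
rewrite !mxE rmorph_sum; apply: eq_bigr => i _.
by rewrite !mxE -nrm2E.
Qed.


Lemma nrm2_div (c s q : R) : q != 0 ->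
  nrm2 ((c +i* s) / q%:C) = (c ^+ 2 + s ^+ 2) / q ^+ 2.
Proof. move=> hq; rewrite /nrm2 /=; field; rewrite ?expf_neq0 // ?addr0 ?expf_neq0 //. Qed.

Lemma mc_nrm2 n (phi : 'cV[R[i]]_n) : (0 < n)%N -> max_coherent phi ->
  forall i, nrm2 (phi i 0) = n%:R^-1.
Proof.
move=> n0 [th h] i; rewrite h nrm2_div ?cos2Dsin2 ?sqr_sqrtr ?div1r ?ler0n //.
by rewrite sqrtr_eq0 -ltNge ltr0n.
Qed.

Lemma mc_sum n (phi : 'cV[R[i]]_n) : (0 < n)%N -> max_coherent phi ->
  \sum_i nrm2 (phi i 0) = 1.
Proof.
move=> n0 hm; under eq_bigr do rewrite (@mc_nrm2 n phi n0 hm).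
rewrite sumr_const card_ord -mulr_natr; field; by rewrite pnatr_eq0 -lt0n.
Qed.

Lemma nrm2_conj z : nrm2 z^* = nrm2 z.
Proof. by case: z => a b; rewrite /nrm2 /= sqrrN. Qed.

Lemma ReD (x y : R[i]) : complex.Re (x + y) = complex.Re x + complex.Re y.
Proof. by case: x; case: y. Qed.

Lemma Re_sum I (r : seq I) (F : I -> R[i]) :
  complex.Re (\sum_(i <- r) F i) = \sum_(i <- r) complex.Re (F i).
Proof. exact: (big_morph _ ReD (erefl _)). Qed.

Lemma ReMl (a : R) (z : R[i]) : complex.Re (a%:C * z) = a * complex.Re z.
Proof. by case: z => x y /=; rewrite mul0r subr0. Qed.

Lemma ReMr (a : R) (z : R[i]) : complex.Re (z * a%:C) = complex.Re z * a.
Proof. by rewrite mulrC ReMl mulrC. Qed.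

Lemma mxtC m p (A : 'M[R[i]]_(m, p)) i j : (A^t*) i j = (A j i)^*.
Proof. by rewrite !mxE. Qed.

Lemma fid_gen n (rho : 'M[R[i]]_n) (phi : 'cV_n) : fidelity rho phi =
  complex.Re (\sum_j \sum_i (phi i 0)^* * rho i j * phi j 0).
Proof.
rewrite /fidelity mxE; congr complex.Re; apply: eq_bigr => j _.
by rewrite mxE big_distrl; apply: eq_bigr => i _; rewrite !mxE.
Qed.

Lemma conjR (a : R) : Num.conj (a%:C) = a%:C.
Proof. exact: conjc_real. Qed.

Definition sg (b : bool) : R := if b then 1 else -1.

Lemma sgN b : sg (~~ b) = - sg b.
Proof. by case: b; rewrite /= ?opprK. Qed.

Lemma sgM b : sg b * sg b = 1.
Proof. by case: b; rewrite /= ?mulr1 ?mulrNN ?mulr1. Qed.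

Lemma sum_sg n (i j : 'I_n) : \sum_(s : {ffun 'I_n -> bool}) sg (s i) * sg (s j) =
  (i == j)%:R * #|{: {ffun 'I_n -> bool}}|%:R.
Proof.
case: eqVneq => [<-|hij].
  under eq_bigr do rewrite sgM.
  by rewrite sumr_const mul1r.
pose flip (s : {ffun 'I_n -> bool}) := [ffun k => if k == i then ~~ s k else s k].
have flipK : cancel flip flip.
  by move=> s; apply/ffunP => k; rewrite !ffunE; case: eqP => // _; rewrite negbK.
set S := \sum_s _.
have : S = - S.
  rewrite {1}/S (reindex_inj (can_inj flipK)) /= -sumrN; apply: eq_bigr => s _.
  by rewrite !ffunE eqxx eq_sym (negbTE hij) sgN mulNr.
by rewrite mul0r => h; lra.
Qed.

Definition angle (z : R[i]) : R :=
  if 0 <= complex.Im z then acos (complex.Re z) else - acos (complex.Re z).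

Lemma angleP z : nrm2 z = 1 -> cos (angle z) +i* sin (angle z) = z.
Proof.
case: z => x y; rewrite /nrm2 /angle /= => h.
have hx : -1 <= x <= 1 by apply/andP; split; nra.
have hxi : x \in `[(-1), 1] by rewrite in_itv /= hx.
have hs : sin (acos x) = `|y|.
  by rewrite sin_acos // -sqrtr_sqr; congr Num.sqrt; lra.
case: (lerP 0 y) => hy.
  by rewrite acosK // hs ger0_norm.
by rewrite cosN sinN acosK // hs ltr0_norm // opprK.
Qed.

Lemma nrm2M z (a : R) : nrm2 (z * a%:C) = nrm2 z * a ^+ 2.
Proof. by case: z => x y; rewrite /nrm2 /=; ring. Qed.

Definition nr (z : R[i]) : R := Num.sqrt (nrm2 z).

Lemma normE2 z : `|z| = (nr z)%:C.
Proof. exact: normc_def. Qed.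

Lemma eq_const n (a : 'I_n -> R) c : (forall i, 0 <= a i) -> 0 <= c ->
  c ^+ 2 * n%:R = 1 -> \sum_i a i ^+ 2 = 1 -> 1 <= (\sum_i a i) ^+ 2 * c ^+ 2 ->
  forall i, a i = c.
Proof.
move=> ha hc hcn ha2 hA.
have hA0 : 0 <= \sum_i a i by apply: sumr_ge0 => i _; exact: ha.
set A := \sum_i a i in hA hA0.
have hS : \sum_i (a i - c) ^+ 2 = \sum_i a i ^+ 2 - A * c *+ 2 + c ^+ 2 * n%:R.
  under eq_bigr do rewrite sqrrB.
  rewrite big_split /= big_split /= sumrN sumrMnl -mulr_suml sumr_const card_ord.
  by rewrite mulr_natr.
have hS0 : \sum_i (a i - c) ^+ 2 = 0.
  apply/eqP; rewrite eq_le sumr_ge0 ?andbT; last by move=> i _; exact: sqr_ge0.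
  have hAc : 1 <= A * c.
    by rewrite -(@ler_pXn2r _ 2) ?nnegrE ?mulr_ge0 // expr1n exprMn.
  rewrite hS ha2 hcn mulr2n; lra.
move=> i; apply/eqP; rewrite -subr_eq0 -sqrf_eq0; apply/eqP.
by apply: (psumr_eq0P (fun i _ => sqr_ge0 (a i - c)) hS0).
Qed.

Lemma fid_rank1 n (rho : 'M[R[i]]_n) (v phi : 'cV_n) : rho = v *m v^t* ->
  fidelity rho phi = nrm2 ((v^t* *m phi) 0 0).
Proof.
rewrite /fidelity => ->.
have -> : phi^t* *m (v *m v^t*) *m phi = (v^t* *m phi)^t* *m (v^t* *m phi).
  by rewrite trmxC_mul trmxCK !mulmxA.
rewrite -[X in _ *m X](trmxCK (v^t* *m phi)) dot_nrm2 big_ord1 mxtC nrm2_conj //.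
Qed.

Lemma fid_bound n (v phi : 'cV[R[i]]_n) : (0 < n)%N -> max_coherent phi ->
  nrm2 ((v^t* *m phi) 0 0) <= (\sum_i nr (v i 0)) ^+ 2 / n%:R.
Proof.
move=> n0 hm; set z := (v^t* *m phi) 0 0.
set c := Num.sqrt (n%:R^-1 : R).
have hphi i : nr (phi i 0) = c by rewrite /nr (@mc_nrm2 n phi n0 hm).
have hz : `|z| <= \sum_i `|v i 0| * `|phi i 0|.
  rewrite /z mxE; apply: le_trans (ler_norm_sum _ _ _) _; apply: ler_sum => i _.
  by rewrite mxtC normrM norm_conjC.
move: hz; rewrite normE2.
under eq_bigr do rewrite !normE2 hphi -rmorphM.
rewrite -rmorph_sum lecR -mulr_suml => hz.
have hc : c ^+ 2 = n%:R^-1 by rewrite sqr_sqrtr // invr_ge0 ler0n.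
have hnr : nrm2 z = nr z ^+ 2 by rewrite sqr_sqrtr // nrm2_ge0.
rewrite hnr -hc -exprMn ler_pXn2r // ?nnegrE ?sqrtr_ge0 //.
by rewrite mulr_ge0 ?sqrtr_ge0 // sumr_ge0 // => i _; rewrite sqrtr_ge0.
Qed.

Section Spec.
Variables (n : nat) (rho : 'M[R[i]]_n).
Hypothesis Hh : rho^t* = rho.
Hypothesis Hpsd : forall v : 'cV[R[i]]_n, 0 <= (v ^t* *m rho *m v) 0 0.
Hypothesis Htr : \tr rho = 1.

Let P := spectralmx rho.
Let D := spectral_diag rho.

Lemma PPt : P *m P^t* = 1%:M.
Proof. exact/unitarymxP/spectral_unitarymx. Qed.

Lemma PtP : P^t* *m P = 1%:M.
Proof.
have := spectral_unitarymx rho; rewrite -trmxC_unitary => /unitarymxP.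
by rewrite trmxCK.
Qed.

Lemma rhoE : rho = P^t* *m diag_mx D *m P.
Proof.
have /orthomx_spectralP : rho \is normalmx by apply/normalmxP; rewrite Hh.
by rewrite invmx_unitary // spectral_unitarymx.
Qed.

Lemma formE (x : 'rV_n) : (x *m rho *m x^t*) 0 0 =
  \sum_k D 0 k * (nrm2 ((x *m P^t*) 0 k))%:C.
Proof.
rewrite rhoE; set y := x *m P^t*.
have -> : x *m (P^t* *m diag_mx D *m P) *m x^t* = y *m diag_mx D *m y^t*.
  by rewrite /y !trmxC_mul trmxCK !mulmxA.
rewrite mxE; apply: eq_bigr => k _.
by rewrite mul_mx_diag !mxE nrm2E [_ * D 0 k]mulrC -mulrA.
Qed.

Lemma normE (x : 'rV_n) : (x *m x^t*) 0 0 = (\sum_k nrm2 ((x *m P^t*) 0 k))%:C.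
Proof.
rewrite -dot_nrm2 trmxC_mul trmxCK mulmxA -[x *m P^t* *m P]mulmxA PtP mulmx1 //.
Qed.

Lemma D_ge0 k : 0 <= D 0 k.
Proof.
pose x := (delta_mx 0 k : 'rV[R[i]]_n) *m P.
have hy : x *m P^t* = delta_mx 0 k by rewrite /x -mulmxA PPt mulmx1.
have := Hpsd (x^t*); rewrite trmxCK formE hy (bigD1 k) //= big1 ?addr0.
  by rewrite !mxE !eqxx /nrm2 /= expr0n /= addr0 expr1n mulr1.
by move=> j hj; rewrite !mxE (negbTE hj) andbF /nrm2 /= expr0n /= addr0 mulr0.
Qed.


Definition Dr k := complex.Re (D 0 k).

Lemma DrE k : D 0 k = (Dr k)%:C.
Proof. by move: (D_ge0 k); rewrite /Dr; case: (D 0 k) => a b /ger0_Im /= ->. Qed.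

Lemma Dr_ge0 k : 0 <= Dr k.
Proof. by have := D_ge0 k; rewrite DrE ler0c. Qed.

Lemma sumDr : \sum_k Dr k = 1.
Proof.
have := Htr; rewrite {1}rhoE mxtrace_mulC mulmxA PPt mul1mx mxtrace_diag.
under eq_bigr do rewrite DrE.
by rewrite -rmorph_sum => /complexI.
Qed.

Lemma formR (x : 'rV_n) : (x *m rho *m x^t*) 0 0 =
  (\sum_k Dr k * nrm2 ((x *m P^t*) 0 k))%:C.
Proof. by rewrite formE rmorph_sum; apply: eq_bigr => k _; rewrite DrE rmorphM. Qed.

Lemma form_le (x : 'rV_n) lm : (forall k, Dr k <= lm) ->
  \sum_k Dr k * nrm2 ((x *m P^t*) 0 k) <= lm * \sum_k nrm2 ((x *m P^t*) 0 k).
Proof.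
move=> hl; rewrite mulr_sumr; apply: ler_sum => k _.
by apply: ler_wpM2r; [exact: nrm2_ge0 | exact: hl].
Qed.

Lemma delta_diag k : (delta_mx 0 k : 'rV[R[i]]_n) *m diag_mx D = D 0 k *: delta_mx 0 k.
Proof.
apply/rowP => j; rewrite mul_mx_diag !mxE.
by case: (eqVneq j k) => [->|hj]; rewrite ?eqxx ?mul1r ?mulr1 // ?(negbTE hj) /= ?mul0r ?mulr0 ?andbF.
Qed.

Lemma eig_D k : eigenvalue rho (D 0 k).
Proof.
apply/eigenvalueP; pose x := (delta_mx 0 k : 'rV[R[i]]_n) *m P.
have hy : x *m P^t* = delta_mx 0 k by rewrite /x -mulmxA PPt mulmx1.
exists x.
  by rewrite {1}rhoE !mulmxA hy delta_diag scalemxAl.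
apply/eqP => hx; move: hy; rewrite hx mul0mx => /rowP /(_ k).
by rewrite !mxE !eqxx /= => /eqP; rewrite eq_sym oner_eq0.
Qed.

Lemma eig_le a lm : (forall k, Dr k <= lm) -> eigenvalue rho a -> complex.Re a <= lm.
Proof.
move=> hl /eigenvalueP [v hv vn0].
have hf := formR v; have hn := normE v.
have := form_le v lm hl.
set t := \sum_k Dr k * _ in hf *; set s := \sum_k nrm2 _ in hn *.
have s_gt0 : 0 < s.
  rewrite lt_def sumr_ge0 ?andbT; last by move=> k _; exact: nrm2_ge0.
  apply/eqP => s0; move: hn; rewrite s0 dot_nrm2 => /complexI h.
  have h2 := psumr_eq0P (fun i _ => nrm2_ge0 (v 0 i)) h.
  by move/eqP: vn0; apply; apply/rowP => i; rewrite mxE; apply: nrm2_eq0; apply: h2.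
have : a * s%:C = t%:C by rewrite -hn -hf hv -scalemxAl [in RHS]mxE.
case: a {hv} => ar ai /= [<- _].
by rewrite mulr0 subr0 ler_pM2r.
Qed.


Lemma n_gt0 : (0 < n)%N.
Proof.
rewrite lt0n; apply/eqP => n0; move: Htr; rewrite /mxtrace big1.
  by move/eqP; rewrite eq_sym oner_eq0.
by move=> i; have := ltn_ord i; rewrite {2}n0.
Qed.

Lemma fid_norm (phi : 'cV_n) :
  \sum_k nrm2 ((phi^t* *m P^t*) 0 k) = \sum_i nrm2 (phi i 0).
Proof.
apply: complexI; rewrite -normE dot_nrm2.
by congr (_ %:C); apply: eq_bigr => i _; rewrite !mxE nrm2_conj.
Qed.

Lemma fidE (phi : 'cV_n) :
  fidelity rho phi = \sum_k Dr k * nrm2 ((phi^t* *m P^t*) 0 k).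
Proof. by rewrite /fidelity; have := formR (phi^t*); rewrite trmxCK => ->. Qed.

Lemma fid_le (phi : 'cV_n) lm : (forall k, Dr k <= lm) -> max_coherent phi ->
  fidelity rho phi <= lm.
Proof.
move=> hl hm; rewrite fidE; apply: le_trans (form_le _ lm hl) _.
by rewrite fid_norm (@mc_sum n phi n_gt0 hm) mulr1.
Qed.


Definition phis (s : {ffun 'I_n -> bool}) : 'cV[R[i]]_n :=
  \col_i ((cos (if s i then 0 else pi) +i* sin (if s i then 0 else pi))
            / (Num.sqrt (n%:R : R))%:C).

Lemma phis_mc s : max_coherent (phis s).
Proof. by exists (fun i => if s i then 0 else pi) => i; rewrite mxE. Qed.

Lemma phisE s i : phis s i 0 = (sg (s i) / Num.sqrt (n%:R : R))%:C.
Proof.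
rewrite mxE fmorph_div; case: (s i); rewrite /= ?cos0 ?sin0 ?cospi ?sinpi //.
Qed.

Lemma fid_s s : fidelity rho (phis s) =
  \sum_j \sum_i (sg (s i) * sg (s j) / n%:R) * complex.Re (rho i j).
Proof.
rewrite fid_gen Re_sum; apply: eq_bigr => j _.
rewrite Re_sum; apply: eq_bigr => i _.
rewrite !phisE conjR ReMr ReMl.
have hq : Num.sqrt (n%:R : R) != 0 by rewrite sqrtr_eq0 -ltNge ltr0n n_gt0.
rewrite -[n%:R in RHS](sqr_sqrtr (ler0n _ n)); field; exact: hq.
Qed.


Lemma Re_tr : \sum_j complex.Re (rho j j) = 1.
Proof. by rewrite -Re_sum; have := Htr; rewrite /mxtrace => ->. Qed.

Lemma avg : \sum_(s : {ffun 'I_n -> bool}) fidelity rho (phis s) =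
  #|{: {ffun 'I_n -> bool}}|%:R / n%:R.
Proof.
under eq_bigr do rewrite fid_s.
rewrite exchange_big /=.
under eq_bigr => j _.
  rewrite exchange_big /=.
  under eq_bigr => i _.
    rewrite -mulr_suml -mulr_suml sum_sg.
    over.
  rewrite (bigD1 j) //= big1 ?addr0; last first.
    by move=> i hij; rewrite (negbTE hij) !mul0r.
  over.
under eq_bigr do rewrite eqxx mul1r.
by rewrite -mulr_sumr Re_tr mulr1.
Qed.

Lemma exists_good : exists s, n%:R^-1 <= fidelity rho (phis s).
Proof.
case: (boolP [exists s, n%:R^-1 <= fidelity rho (phis s)]).
  by move=> /existsP [s hs]; exists s.
move=> /existsPn h; exfalso.
have : \sum_(s : {ffun 'I_n -> bool}) fidelity rho (phis s) <
       \sum_(s : {ffun 'I_n -> bool}) n%:R^-1.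
  apply: ltr_sum.
    by apply/hasP; exists [ffun => true]; rewrite ?mem_index_enum.
  by move=> s _; rewrite ltNge; apply: h.
rewrite avg sumr_const -[X in _ < X]mulr_natr mulrC ltxx. by [].
Qed.

Local Open Scope classical_set_scope.
Definition CS := [set fidelity rho phi | phi in @max_coherent R n].

Lemma CS_ub lm : (forall k, Dr k <= lm) -> ubound CS lm.
Proof. by move=> hl y [phi hm <-]; exact: fid_le. Qed.

Lemma coh_ge phi lm : (forall k, Dr k <= lm) -> max_coherent phi ->
  fidelity rho phi <= coh_fraction rho.
Proof.
move=> hl hm; apply: ub_le_sup; first by exists lm; exact: CS_ub.
by exists phi.
Qed.

Lemma coh_le lm : (forall k, Dr k <= lm) -> coh_fraction rho <= lm.
Proof.
move=> hl; apply: ge_sup; last exact: CS_ub.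
by exists (fidelity rho (phis [ffun => true])); exists (phis [ffun => true]) => //; exact: phis_mc.
Qed.


Lemma exists_max : exists k0, forall k, Dr k <= Dr k0.
Proof.
pose i0 : 'I_n := Ordinal n_gt0.
have [k0 _ h] := @arg_maxP _ R 'I_n i0 xpredT Dr isT.
by exists k0 => k; exact: h.
Qed.

Lemma Dr_le1 k : Dr k <= 1.
Proof.
rewrite -sumDr (bigD1 k) //= lerDl; apply: sumr_ge0 => j _; exact: Dr_ge0.
Qed.

Lemma incoh_fid phi : is_diag_mx rho -> max_coherent phi ->
  fidelity rho phi = n%:R^-1.
Proof.
move=> /is_diag_mxP hd hm; rewrite fid_gen Re_sum.
have -> : n%:R^-1 = n%:R^-1 * \sum_j complex.Re (rho j j) by rewrite Re_tr mulr1.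
rewrite mulr_sumr.
apply: eq_bigr => j _; rewrite (bigD1 j) //= big1 ?addr0; last first.
  by move=> i hij; rewrite hd ?mulr0 ?mul0r // eq_sym.
rewrite mulrC mulrA -nrm2E ReMl.
by rewrite (@mc_nrm2 n phi n_gt0 hm).
Qed.

Lemma incoh_coh : is_diag_mx rho -> coh_fraction rho = n%:R^-1.
Proof.
move=> hd; have [k0 hk0] := exists_max; apply/eqP; rewrite eq_le; apply/andP; split.
  apply: ge_sup.
    by exists (fidelity rho (phis [ffun => true])); exists (phis [ffun => true]) => //; exact: phis_mc.
  by move=> y [phi hm <-]; rewrite incoh_fid.
have [s hs] := exists_good; apply: le_trans hs _; exact: (coh_ge _ _ hk0 (phis_mc s)).
Qed.


Lemma Dr_one k0 : Dr k0 = 1 -> forall k, Dr k = (k == k0)%:R.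
Proof.
move=> h k; case: eqVneq => [->//|hk].
have h0 : \sum_(j | j != k0) Dr j = 0.
  by move: sumDr; rewrite (bigD1 k0) //= h => h'; lra.
exact: (psumr_eq0P (fun j _ => Dr_ge0 j) h0).
Qed.

Lemma rho_rank1 k0 : Dr k0 = 1 ->
  rho = ((delta_mx 0 k0 : 'rV[R[i]]_n) *m P)^t* *m ((delta_mx 0 k0 : 'rV[R[i]]_n) *m P).
Proof.
move=> h; rewrite trmxC_mul -!mulmxA {1}rhoE -!mulmxA; congr (_ *m _).
rewrite !mulmxA; congr (_ *m _).
have -> : (delta_mx 0 k0 : 'rV[R[i]]_n)^t* = (delta_mx 0 k0)^T.
  apply/matrixP => i j; rewrite !mxE.
  by case: (j == 0); case: (i == k0); rewrite /= ?conjC0 ?conjC1.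
rewrite trmx_delta.
rewrite mul_delta_mx; apply/matrixP => i j; rewrite !mxE DrE (Dr_one _ h).
case: (eqVneq i j) => [<-|hij] /=.
  by rewrite mulr1n andbb; case: (i == k0).
by rewrite mulr0n; case: (eqVneq i k0) => [ei|] //=; move: hij; rewrite ei eq_sym => /negbTE ->.
Qed.

Lemma u_norm k0 : \sum_i nrm2 ((((delta_mx 0 k0 : 'rV[R[i]]_n) *m P)^t*) i 0) = 1.
Proof.
set e := (delta_mx 0 k0 : 'rV[R[i]]_n).
under eq_bigr do rewrite mxtC nrm2_conj.
apply: complexI; rewrite -dot_nrm2 trmxC_mul mulmxA -(mulmxA e) PPt mulmx1 dot_nrm2.
congr (_ %:C); rewrite (bigD1 k0) //= big1 ?addr0.
  by rewrite !mxE !eqxx /nrm2 /= expr0n /= addr0 expr1n.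
by move=> j hj; rewrite !mxE (negbTE hj) /nrm2 /= expr0n /= addr0.
Qed.


Lemma main_all :
  (exists lmax : R, largest_eigenvalue rho lmax /\
     (n%:R)^-1 <= coh_fraction rho /\ coh_fraction rho <= lmax /\ lmax <= 1) /\
  (coh_fraction rho = 1 <->
     exists phi : 'cV[R[i]]_n, max_coherent phi /\ rho = phi *m phi ^t*) /\
  (incoherent rho -> coh_fraction rho = (n%:R)^-1).
Proof.
have n0 := n_gt0.
have [k0 hk0] := exists_max.
split.
  exists (Dr k0); split; [split|].
  - by rewrite -DrE; exact: eig_D.
  - by move=> a ha; exact: eig_le hk0 ha.
  split.
    have [s hs] := exists_good; exact: le_trans hs (coh_ge _ _ hk0 (phis_mc s)).
  by split; [exact: coh_le _ hk0 | exact: Dr_le1].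
split; last exact: incoh_coh.
have hne : CS !=set0.
  by exists (fidelity rho (phis [ffun => true])); exists (phis [ffun => true]) => //; exact: phis_mc.
split.
  move=> hc.
  have hk01 : Dr k0 = 1.
    by apply/eqP; rewrite eq_le Dr_le1 /= -hc; exact: coh_le _ hk0.
  set u := ((delta_mx 0 k0 : 'rV[R[i]]_n) *m P)^t*.
  have hr : rho = u *m u^t* by rewrite /u trmxCK; exact: rho_rank1.
  have hA : 1 <= (\sum_i nr (u i 0)) ^+ 2 / n%:R.
    rewrite -[X in X <= _]hc; apply: ge_sup => // y [phi hm <-].
    by rewrite (@fid_rank1 n rho u phi hr); exact: (@fid_bound n u phi n0 hm).
  set c := Num.sqrt (n%:R^-1 : R).
  have hc2 : c ^+ 2 = n%:R^-1 by rewrite sqr_sqrtr // invr_ge0 ler0n.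
  have hn : (n%:R : R) != 0 by rewrite pnatr_eq0 -lt0n.
  have hu i : nrm2 (u i 0) = n%:R^-1.
    have := @eq_const n (fun i => nr (u i 0)) c (fun i => sqrtr_ge0 _) (sqrtr_ge0 _).
    rewrite hc2 mulVf // => /(_ erefl).
    under eq_bigr do rewrite sqr_sqrtr ?nrm2_ge0 //.
    rewrite u_norm => /(_ erefl); move=> /(_ hA) /(_ i) hi.
    by rewrite -hc2 -hi sqr_sqrtr // nrm2_ge0.
  exists u; split => //.
  set q := Num.sqrt (n%:R : R).
  have hq : q%:C != 0 by rewrite fmorph_eq0 sqrtr_eq0 -ltNge ltr0n.
  exists (fun i => angle (u i 0 * q%:C)) => i.
  rewrite angleP ?mulfK // nrm2M hu sqr_sqrtr ?ler0n // mulVf //.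
move=> [phi [hm hr]]; apply/eqP; rewrite eq_le; apply/andP; split.
  exact: le_trans (coh_le _ hk0) (Dr_le1 k0).
have h1 : fidelity rho phi = 1.
  rewrite (@fid_rank1 n rho phi phi hr).
  have -> : (phi^t* *m phi) 0 0 = 1.
    rewrite -[X in _ *m X](trmxCK phi) dot_nrm2.
    under eq_bigr do rewrite mxtC nrm2_conj.
    by rewrite (@mc_sum n phi n0 hm).
  by rewrite /nrm2 /= expr1n expr0n addr0.
by rewrite -h1; exact: (coh_ge _ _ hk0 hm).
Qed.

End Spec.

End Gen.

Theorem mainTheorem4 (R : realType) (d : nat) (rho : 'M[R[i]]_d) :
  density_op rho ->
  (exists lmax : R, largest_eigenvalue rho lmax /\
     (d%:R)^-1 <= coh_fraction rho /\ coh_fraction rho <= lmax /\ lmax <= 1) /\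
  (coh_fraction rho = 1 <->
     exists phi : 'cV[R[i]]_d, max_coherent phi /\ rho = phi *m phi ^t*) /\
  (incoherent rho -> coh_fraction rho = (d%:R)^-1).
Proof. by move=> [Hh [Hpsd Htr]]; exact: main_all Hh Hpsd Htr. Qed.
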